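(* Let $m\ge 1$ and $\epsilon>0$. Suppose $p_1,\dots,p_m$ and $q_1,\dots,q_m$ are unknown probability distributions on $\{0,1\}$, accessible in the query model: for any index $i$ one may request independent samples from $p_i$ or from $q_i$. There is a randomized algorithm that outputs ''Yes'' with probability at least $2/3$ if $p_i=q_i$ for all $1\le i\le m$, outputs ''No'' with probability at least $2/3$ if $\frac{1}{m}\sum_{i=1}^m\|p_i-q_i\|_2^2>\epsilon^2$, and uses in total $O\!\left(\frac{(1+\log m)^4}{\epsilon^2}\right)$ samples.
   Context: $\|p-q\|_2$ denotes the Euclidean norm of the difference of the probability vectors $p=(p(0),p(1))$ and $q=(q(0),q(1))$. *)

(* Defs.v *)
From HB Require Import structures.
From mathcomp Require Import all_boot all_order all_algebra.
From mathcomp Require Import all_classical all_reals all_analysis.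
Set Implicit Arguments. Unset Strict Implicit. Unset Printing Implicit Defensive.
Import Order.TTheory GRing.Theory Num.Theory.
Local Open Scope ring_scope.

(* A distribution on {0,1}, given as its probability vector (d false, d true)
   = (d(0), d(1)). *)
Definition is_dist (R : realType) (d : bool -> R) : Prop :=
  0 <= d false /\ 0 <= d true /\ d false + d true = 1.

Definition sqdist (R : realType) (d e : bool -> R) : R :=
  (d false - e false) ^+ 2 + (d true - e true) ^+ 2.

(* Randomized adaptive algorithms in the query model, as finite decision trees:
   - Ret b       : stop, output b (true = "Yes", false = "No");
   - Query i s k : draw one fresh independent sample from p_i (s = false)
                   or from q_i (s = true), observe the bit x, continue with k x;
   - Flip r a b  : internal randomness: with probability r continue with a,
                   otherwise with b. *)
Inductive alg (R : Type) (m : nat) : Type :=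
| Ret of bool
| Query of 'I_m & bool & (bool -> alg R m)
| Flip of R & alg R m & alg R m.

Arguments Ret {R m}.
Arguments Query {R m}.
Arguments Flip {R m}.

Fixpoint wf_alg (R : realType) (m : nat) (A : alg R m) : Prop :=
  match A with
  | Ret _ => True
  | Query _ _ k => wf_alg (k false) /\ wf_alg (k true)
  | Flip r a b => 0 <= r <= 1 /\ wf_alg a /\ wf_alg b
  end.

Fixpoint cost (R : Type) (m : nat) (A : alg R m) : nat :=
  match A with
  | Ret _ => 0
  | Query _ _ k => (maxn (cost (k false)) (cost (k true))).+1
  | Flip _ a b => maxn (cost a) (cost b)
  end.

Fixpoint prob_yes (R : realType) (m : nat) (p q : 'I_m -> bool -> R)
    (A : alg R m) : R :=
  match A with
  | Ret b => if b then 1 else 0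
  | Query i s k =>
      let d := if s then q i else p i in
      d false * prob_yes p q (k false) + d true * prob_yes p q (k true)
  | Flip r a b => r * prob_yes p q a + (1 - r) * prob_yes p q b
  end.

(* Main.v *)
Require Import Defs.
From HB Require Import structures.
From mathcomp Require Import all_boot all_order all_algebra.
From mathcomp Require Import all_classical all_reals all_analysis.
From mathcomp Require Import ring lra zify.
Import Order.TTheory GRing.Theory Num.Theory.
Local Open Scope ring_scope.
Set Implicit Arguments. Unset Strict Implicit. Unset Printing Implicit Defensive.

Definition dists (R : realType) (m : nat) (p q : 'I_m -> bool -> R) :=
  (forall i, is_dist (p i)) /\ (forall i, is_dist (q i)).

Fixpoint subst (R : Type) (m : nat) (A a b : alg R m) : alg R m :=
  match A with
  | Ret x => if x then a else b
  | Query i s k => Query i s (fun x => subst (k x) a b)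
  | Flip r u v => Flip r (subst u a b) (subst v a b)
  end.

Lemma dist_d (R : realType) m (p q : 'I_m -> bool -> R) i (s : bool) :
  dists p q -> is_dist (if s then q i else p i).
Proof. by case=> hp hq; case: s. Qed.

Lemma prob_bounds (R : realType) m (p q : 'I_m -> bool -> R) (A : alg R m) :
  dists p q -> wf_alg A -> 0 <= prob_yes p q A <= 1.
Proof.
move=> D; elim: A => [b|i s k IH|r a IHa b IHb] /=.
- by case: b; rewrite ?lexx ?ler01.
- case=> /(IH false) /andP[h0 h1] /(IH true) /andP[h2 h3].
  have [d0 [d1 e]] := dist_d i s D.
  set x := prob_yes _ _ _ in h0 h1 *; set y := prob_yes _ _ _ in h2 h3 *.
  apply/andP; split; nra.
- case=> /andP[r0 r1] [/IHa /andP[h0 h1] /IHb /andP[h2 h3]].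
  set x := prob_yes _ _ _ in h0 h1 *; set y := prob_yes _ _ _ in h2 h3 *.
  apply/andP; split; nra.
Qed.

Lemma prob_subst (R : realType) m (p q : 'I_m -> bool -> R) (A a b : alg R m) :
  dists p q -> wf_alg A ->
  prob_yes p q (subst A a b) =
    prob_yes p q A * prob_yes p q a + (1 - prob_yes p q A) * prob_yes p q b.
Proof.
move=> D; elim: A => [c|i s k IH|r u IHu v IHv] /=.
- by case: c => _; ring.
- case=> /(IH false) h0 /(IH true) h1; rewrite h0 h1.
  have [d0 [d1 e]] := dist_d i s D.
  have -> : (if s then q i else p i) false = 1 - (if s then q i else p i) true by lra.
  ring.
- case=> _ [/IHu -> /IHv ->]; ring.
Qed.

Lemma wf_subst (R : realType) m (A a b : alg R m) :
  wf_alg A -> wf_alg a -> wf_alg b -> wf_alg (subst A a b).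
Proof.
move=> + wa wb; elim: A => [c|i s k IH|r u IHu v IHv] /=.
- by case: c.
- by case=> /IH h0 /IH h1.
- by case=> h [/IHu h0 /IHv h1].
Qed.

Lemma cost_subst (R : Type) m (A a b : alg R m) :
  (cost (subst A a b) <= cost A + maxn (cost a) (cost b))%N.
Proof.
elim: A => [c|i s k IH|r u IHu v IHv] /=.
- by case: c; rewrite add0n ?leq_maxl ?leq_maxr.
- have := IH false; have := IH true; lia.
- have := IHu; have := IHv; lia.
Qed.
Fixpoint samp (R : Type) m (i : 'I_m) (s : bool) (n c : nat) (k : nat -> alg R m) : alg R m :=
  match n with
  | 0 => k c
  | n'.+1 => Query i s (fun x => samp i s n' (if x then c.+1 else c) k)
  end.

Fixpoint Es (R : realType) (d : bool -> R) (n c : nat) (g : nat -> R) : R :=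
  match n with
  | 0 => g c
  | n'.+1 => d false * Es d n' c g + d true * Es d n' c.+1 g
  end.

Lemma prob_samp (R : realType) m (p q : 'I_m -> bool -> R) i s n c k :
  prob_yes p q (samp i s n c k) =
  Es (if s then q i else p i) n c (fun c' => prob_yes p q (k c')).
Proof. by elim: n c => //= n IH c; rewrite !IH. Qed.

Lemma wf_samp (R : realType) m (i : 'I_m) s n c (k : nat -> alg R m) :
  (forall c, wf_alg (k c)) -> wf_alg (samp i s n c k).
Proof. by move=> hk; elim: n c => //= n IH c. Qed.

Lemma cost_samp (R : Type) m (i : 'I_m) s n c (k : nat -> alg R m) B :
  (forall c, cost (k c) <= B)%N -> (cost (samp i s n c k) <= n + B)%N.
Proof.
move=> hk; elim: n c => //= n IH c.
have := IH c; have := IH c.+1; lia.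
Qed.

Lemma Es_ext (R : realType) (d : bool -> R) n c f g :
  (forall x, f x = g x) -> Es d n c f = Es d n c g.
Proof. by move=> h; elim: n c => /= [|n IH] c; rewrite ?IH. Qed.

Lemma Es_le (R : realType) (d : bool -> R) n c f g :
  is_dist d -> (forall x, f x <= g x) -> Es d n c f <= Es d n c g.
Proof.
move=> [d0 [d1 _]] h; elim: n c => /= [|n IH] c //.
by apply: lerD; apply: ler_wpM2l.
Qed.

Lemma Es_aff (R : realType) (d : bool -> R) n c f (al be : R) :
  is_dist d -> Es d n c (fun x => al * f x + be) = al * Es d n c f + be.
Proof.
move=> [d0 [d1 e]]; elim: n c => /= [|n IH] c //.
rewrite !IH; have -> : d false = 1 - d true by lra.
ring.
Qed.

Lemma Es_sq (R : realType) (d : bool -> R) n c (y : R) :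
  is_dist d ->
  Es d n c (fun x => (x%:R - y) ^+ 2) =
  (c%:R + n%:R * d true - y) ^+ 2 + n%:R * (d true * (1 - d true)).
Proof.
move=> [d0 [d1 e]]; elim: n c => /= [|n IH] c.
  by rewrite !mul0r !addr0.
rewrite !IH; have -> : d false = 1 - d true by lra.
rewrite -(addn1 n) -(addn1 c) !natrD; ring.
Qed.

Definition basic (R : realType) m (i : 'I_m) (t : nat) (th : R) : alg R m :=
  samp i false t 0 (fun cp => samp i true t 0
     (fun cq => Ret ((cp%:R - cq%:R) ^+ 2 < th))).

Lemma wf_basic (R : realType) m (i : 'I_m) t (th : R) : wf_alg (basic i t th).
Proof. by apply: wf_samp => c; apply: wf_samp. Qed.

Lemma cost_basic (R : realType) m (i : 'I_m) t (th : R) :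
  (cost (basic i t th) <= t + t)%N.
Proof. apply: cost_samp => c; rewrite -[X in (_ <= X)%N]addn0; exact: cost_samp. Qed.

Definition E2 (R : realType) m (p q : 'I_m -> bool -> R) i t (f : nat -> nat -> R) :=
  Es (p i) t 0 (fun cp => Es (q i) t 0 (fun cq => f cp cq)).

Lemma E2_le (R : realType) m (p q : 'I_m -> bool -> R) i t f g :
  dists p q -> (forall x y, f x y <= g x y) -> E2 p q i t f <= E2 p q i t g.
Proof.
move=> [hp hq] h; apply: Es_le => // x; exact: Es_le.
Qed.

Lemma E2_aff (R : realType) m (p q : 'I_m -> bool -> R) i t f al be :
  dists p q -> E2 p q i t (fun x y => al * f x y + be) = al * E2 p q i t f + be.
Proof.
move=> [hp hq]; rewrite /E2 -Es_aff //; apply: Es_ext => x; exact: Es_aff.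
Qed.

Lemma E2_moment (R : realType) m (p q : 'I_m -> bool -> R) i t (z : R) :
  dists p q ->
  E2 p q i t (fun x y => (x%:R - y%:R - z) ^+ 2) =
  (t%:R * p i true - t%:R * q i true - z) ^+ 2
    + t%:R * (p i true * (1 - p i true)) + t%:R * (q i true * (1 - q i true)).
Proof.
move=> [hp hq]; rewrite /E2.
rewrite (@Es_ext _ _ _ _ _ ( fun x => 1 * (x%:R - (t%:R * q i true + z)) ^+ 2
          + t%:R * (q i true * (1 - q i true)))); last first.
  move=> x; rewrite (@Es_ext _ _ _ _ _ ( fun y => (y%:R - (x%:R - z)) ^+ 2)).
    by rewrite Es_sq //; ring.
  by move=> y; ring.
rewrite (@Es_aff _ _ _ _ (fun x => (x%:R - (t%:R * q i true + z)) ^+ 2)) // Es_sq //.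
ring.
Qed.

Lemma prob_basic (R : realType) m (p q : 'I_m -> bool -> R) i t (th : R) :
  prob_yes p q (basic i t th) =
  E2 p q i t (fun x y => if (x%:R - y%:R) ^+ 2 < th then 1 else 0).
Proof.
rewrite /basic prob_samp /E2; apply: Es_ext => x; rewrite prob_samp.
by apply: Es_ext => y.
Qed.

Lemma var_le (R : realType) (a : R) : a * (1 - a) <= 1/4.
Proof. have h := sqr_ge0 (a - 1/2). nra. Qed.

Lemma basic_flag (R : realType) m (p q : 'I_m -> bool -> R) i t (th : R) :
  dists p q -> 0 < th -> p i = q i ->
  1 - prob_yes p q (basic i t th) <= (t%:R / 2) / th.
Proof.
move=> D th0 pq; rewrite prob_basic.
have -> : 1 - E2 p q i t (fun x y => if (x%:R - y%:R) ^+ 2 < th then 1 else 0)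
   = E2 p q i t (fun x y => -1 * (if (x%:R - y%:R) ^+ 2 < th then 1 else 0) + 1).
  by rewrite E2_aff //; ring.
apply: le_trans (_ : E2 p q i t (fun x y => th^-1 * (x%:R - y%:R - 0) ^+ 2 + 0) <= _).
  apply: E2_le => // x y; rewrite subr0 addr0.
  case: ifP => h.
    rewrite mulr1 addNr; apply: mulr_ge0; [by rewrite invr_ge0 ltW | exact: sqr_ge0].
  by rewrite mulr0 add0r mulrC ler_pdivlMr // mul1r leNgt h.
rewrite E2_aff // E2_moment // pq addr0 subr0 subrr expr0n /= add0r.
have h1 := var_le (q i true).
rewrite mulrC; apply: ler_wpM2r; first by rewrite invr_ge0 ltW.
have t0 : 0 <= (t%:R : R) by [].
nra.
Qed.

Lemma basic_pass (R : realType) m (p q : 'I_m -> bool -> R) i t (th : R) :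
  dists p q -> 0 < th -> 4 * th <= (t%:R * (p i true - q i true)) ^+ 2 ->
  prob_yes p q (basic i t th) <= (t%:R / 2) / th.
Proof.
move=> D th0 hd; rewrite prob_basic.
set z := t%:R * (p i true - q i true).
have hz : 4 * th <= z ^+ 2 by []. clear hd.
apply: le_trans (_ : E2 p q i t (fun x y => th^-1 * (x%:R - y%:R - z) ^+ 2 + 0) <= _).
  apply: E2_le => // x y; rewrite addr0.
  case: ifP => h.
    rewrite mulrC ler_pdivlMr // mul1r.
    move: h; set X := (x%:R - y%:R : R) => h.
    have := sqr_ge0 (2 * X - z).
    clearbody X z; nra.
  apply: mulr_ge0; [by rewrite invr_ge0 ltW | exact: sqr_ge0].
rewrite E2_aff // E2_moment // addr0.
have -> : t%:R * p i true - t%:R * q i true - z = 0 by rewrite /z; ring.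
rewrite expr0n /= add0r.
have h1 := var_le (q i true); have h2 := var_le (p i true).
rewrite mulrC; apply: ler_wpM2r; first by rewrite invr_ge0 ltW.
have t0 : 0 <= (t%:R : R) by [].
nra.
Qed.

Fixpoint andr (R : Type) m (B : alg R m) (r : nat) : alg R m :=
  match r with
  | 0 => Ret false
  | r'.+1 => subst B (Ret true) (andr B r')
  end.

Lemma wf_andr (R : realType) m (B : alg R m) r : wf_alg B -> wf_alg (andr B r).
Proof. by move=> wB; elim: r => //= r IH; apply: wf_subst. Qed.

Lemma cost_andr (R : Type) m (B : alg R m) r : (cost (andr B r) <= r * cost B)%N.
Proof.
elim: r => //= r IH; apply: leq_trans (cost_subst _ _ _) _.
rewrite mulSn leq_add2l /= max0n //.
Qed.

Lemma prob_andr_flag (R : realType) m (p q : 'I_m -> bool -> R) (B : alg R m) r :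
  dists p q -> wf_alg B ->
  1 - prob_yes p q (andr B r) = (1 - prob_yes p q B) ^+ r.
Proof.
move=> D wB; elim: r => /= [|r IH]; first by rewrite expr0 subr0.
rewrite prob_subst // exprS -IH /=; ring.
Qed.

Lemma prob_andr_pass (R : realType) m (p q : 'I_m -> bool -> R) (B : alg R m) r :
  dists p q -> wf_alg B ->
  prob_yes p q (andr B r) <= r%:R * prob_yes p q B.
Proof.
move=> D wB; elim: r => /= [|r IH]; first by rewrite mul0r.
rewrite prob_subst // /= mulr1 -(addn1 r) natrD.
have /andP[h0 h1] := prob_bounds D wB.
have /andP[h2 h3] := prob_bounds D (wf_andr r wB).
set P := prob_yes p q B in h0 h1 IH *; set x := prob_yes p q (andr B r) in h2 h3 IH *.
nra.
Qed.

Fixpoint unif (R : realType) m (s : seq 'I_m) (k : 'I_m -> alg R m) : alg R m :=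
  match s with
  | [::] => Ret true
  | x :: s' => Flip ((size s').+1%:R^-1) (k x) (unif s' k)
  end.

Lemma wf_unif (R : realType) m (s : seq 'I_m) (k : 'I_m -> alg R m) :
  (forall x, wf_alg (k x)) -> wf_alg (unif s k).
Proof.
move=> hk; elim: s => //= x s IH; split => //.
by rewrite invr_ge0 ler0n /= invf_le1 // ?ler1n // ltr0n.
Qed.

Lemma cost_unif (R : realType) m (s : seq 'I_m) (k : 'I_m -> alg R m) B :
  (forall x, cost (k x) <= B)%N -> (cost (unif s k) <= B)%N.
Proof.
move=> hk; elim: s => //= x s IH; by rewrite geq_max hk IH.
Qed.

Lemma prob_unif (R : realType) m (p q : 'I_m -> bool -> R) (s : seq 'I_m) k :
  s != [::] ->
  prob_yes p q (unif s k) * (size s)%:R = \sum_(x <- s) prob_yes p q (k x).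
Proof.
elim: s => //= x s IH _; rewrite big_cons.
case: s IH => [|y s] IH.
  by rewrite big_nil /= invr1 mul1r subrr mul0r !addr0 mulr1.
move: (IH isT) => <-.
rewrite -(addn1 (size (y :: s))) natrD.
set n := (size (y :: s))%:R.
have n0 : n + 1 != 0.
  apply: lt0r_neq0; have : 0 <= n by rewrite /n ler0n.
  lra.
set a := prob_yes p q (k x); set u := prob_yes p q (unif (y :: s) k).
by field.
Qed.

Definition chain (R : Type) m (l : seq (alg R m)) : alg R m :=
  foldr (fun A rest => subst A rest (Ret false)) (Ret true) l.

Lemma wf_chain (R : realType) m (l : seq (alg R m)) :
  (forall A, List.In A l -> wf_alg A) -> wf_alg (chain l).
Proof.
elim: l => //= A l IH h; apply: wf_subst => //.
  by apply: h; left.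
by apply: IH => B hB; apply: h; right.
Qed.

Lemma prob_chain (R : realType) m (p q : 'I_m -> bool -> R) (l : seq (alg R m)) :
  dists p q -> (forall A, List.In A l -> wf_alg A) ->
  prob_yes p q (chain l) = \prod_(A <- l) prob_yes p q A.
Proof.
move=> D; elim: l => [|A l IH] h; first by rewrite big_nil.
rewrite big_cons /= prob_subst //; last by apply: h; left.
rewrite IH /=; first ring.
by move=> B hB; apply: h; right.
Qed.

Lemma cost_chain (R : Type) m (l : seq (alg R m)) :
  (cost (chain l) <= \sum_(A <- l) cost A)%N.
Proof.
elim: l => [|A l IH]; first by rewrite big_nil.
rewrite big_cons /=; apply: leq_trans (cost_subst _ _ _) _.
by rewrite leq_add2l /= maxn0.
Qed.

Lemma sum_ge0_In (R : realType) (T : Type) (l : seq T) (g : T -> R) :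
  (forall x, List.In x l -> 0 <= g x) -> 0 <= \sum_(x <- l) g x.
Proof.
elim: l => [|x l IH] h; first by rewrite big_nil.
rewrite big_cons addr_ge0 //; first by apply: h; left.
by apply: IH => y hy; apply: h; right.
Qed.

Lemma prod_lb (R : realType) (T : Type) (l : seq T) (f : T -> R) :
  (forall x, List.In x l -> 0 <= f x <= 1) ->
  1 - \sum_(x <- l) (1 - f x) <= \prod_(x <- l) f x.
Proof.
elim: l => [|x l IH] h; first by rewrite !big_nil subr0.
rewrite !big_cons.
have /andP[h0 h1] : 0 <= f x <= 1 by apply: h; left.
have IH' := IH (fun y hy => h y (or_intror hy)).
have S0 : 0 <= \sum_(y <- l) (1 - f y).
  apply: sum_ge0_In => y hy; have /andP[_ ?] := h y (or_intror hy); lra.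
set S := \sum_(y <- l) _ in IH' S0 *; set P := \prod_(y <- l) _ in IH' *.
nra.
Qed.

Lemma sum_nseq (R : realType) (T : Type) n (a : T) (F : T -> R) :
  \sum_(x <- nseq n a) F x = n%:R * F a.
Proof.
elim: n => [|n IH]; first by rewrite big_nil mul0r.
by rewrite /= big_cons IH -(addn1 n) natrD; ring.
Qed.

Lemma prod_nseq (R : realType) (T : Type) n (a : T) (F : T -> R) :
  \prod_(x <- nseq n a) F x = F a ^+ n.
Proof.
elim: n => [|n IH]; first by rewrite big_nil expr0.
by rewrite /= big_cons IH exprS.
Qed.

Lemma bern_pow (R : realType) (x : R) n :
  0 <= x <= 1 -> (1 - x) ^+ n * (1 + n%:R * x) <= 1.
Proof.
move=> /andP[x0 x1]; elim: n => [|n IH]; first by rewrite expr0 mul0r addr0 mul1r.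
rewrite exprS -(addn1 n) natrD.
have y0 : 0 <= (1 - x) ^+ n by apply: exprn_ge0; lra.
have n0 : 0 <= (n%:R : R) by [].
set y := (1 - x) ^+ n in y0 IH *.
have h : (1 - x) * (1 + (n%:R + 1) * x) <= 1 + n%:R * x by nra.
have := ler_wpM2l y0 h.
rewrite mulrA (mulrC y); lra.
Qed.

Lemma sum_pow2 n : (\sum_(j < n) 2 ^ (j + 3) + 8 = 2 ^ (n + 3))%N.
Proof.
elim: n => [|n IH]; first by rewrite big_ord0.
rewrite big_ord_recr /=.
have e : (2 ^ (n.+1 + 3) = 2 * 2 ^ (n + 3))%N by rewrite addSn expnS.
by rewrite addnAC IH e mul2n -addnn.
Qed.

Definition atom (R : realType) m (t : nat) (th : R) (r : nat) : alg R m :=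
  unif (enum 'I_m) (fun i => andr (basic i t th) r).

Lemma wf_atom (R : realType) m t (th : R) r : wf_alg (atom m t th r).
Proof. by apply: wf_unif => i; apply: wf_andr; apply: wf_basic. Qed.

Lemma cost_atom (R : realType) m t (th : R) r : (cost (atom m t th r) <= r * (t + t))%N.
Proof.
apply: cost_unif => i; apply: leq_trans (cost_andr _ _) _.
by rewrite leq_mul2l cost_basic orbT.
Qed.

Lemma size_ie m : size (enum 'I_m) = m.
Proof. exact: size_enum_ord. Qed.

Lemma prob_atom (R : realType) m (p q : 'I_m -> bool -> R) t th r :
  (0 < m)%N ->
  prob_yes p q (atom m t th r) * m%:R =
  \sum_(i < m) prob_yes p q (andr (basic i t th) r).
Proof.
move=> m0; have h := @prob_unif R m p q (enum 'I_m) (fun i => andr (basic i t th) r).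
rewrite size_ie big_enum /= in h; apply: h.
by rewrite -size_eq0 size_ie -lt0n.
Qed.

Lemma atom_null (R : realType) m (p q : 'I_m -> bool -> R) t (th : R) r :
  (0 < m)%N -> dists p q -> (forall i, p i = q i) -> 0 < th ->
  (t%:R / 2) / th <= 1/4 ->
  1 - prob_yes p q (atom m t th r) <= (1/4) ^+ r.
Proof.
move=> m0 D pq th0 hb.
have mR : 0 < (m%:R : R) by rewrite ltr0n.
have e := prob_atom p q t th r m0.
have H : \sum_(i < m) (1 - prob_yes p q (andr (basic i t th) r)) <= \sum_(i < m) (1/4) ^+ r.
  apply: ler_sum => i _.
  rewrite prob_andr_flag //; last exact: wf_basic.
  have h := @basic_flag R m p q i t th D th0 (pq i).
  have /andP[h0 h1] := prob_bounds D (wf_basic i t th).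
  apply: lerXn2r; rewrite ?nnegrE; lra.
rewrite sumrB !sumr_const card_ord -e -[(1/4)^+r *+ m]mulr_natr in H.
rewrite -(ler_pM2r mR) mulrBl; by move: H; rewrite !mul1r.
Qed.

Lemma atom_alt (R : realType) m (p q : 'I_m -> bool -> R) t (th : R) r (g : 'I_m -> bool) :
  (0 < m)%N -> dists p q -> 0 < th ->
  r%:R * ((t%:R / 2) / th) <= 1/2 ->
  (forall i, g i -> 4 * th <= (t%:R * (p i true - q i true)) ^+ 2) ->
  prob_yes p q (atom m t th r) * m%:R <=
  m%:R - (\sum_(i < m) (if g i then 1 else 0)) / 2.
Proof.
move=> m0 D th0 hb hg.
rewrite prob_atom // -[m in m%:R]card_ord -sumr_const mulr_suml -sumrB.
apply: ler_sum => i _.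
have /andP[h0 h1] := prob_bounds D (wf_andr r (wf_basic i t th)).
case: (boolP (g i)) => gi; last by rewrite mul0r subr0.
have h := basic_pass D th0 (hg i gi).
have h2 := prob_andr_pass r D (wf_basic i t th).
have : r%:R * prob_yes p q (basic i t th) <= r%:R * (t%:R / 2 / th).
  by apply: ler_wpM2l.
lra.
Qed.

Definition ind (R : realType) (b : bool) : R := if b then 1 else 0.

Lemma layer (R : realType) (g0 : R) J (x : R) : 0 <= g0 ->
  (x < g0 * 2 ^+ J -> x <= g0 + \sum_(j < J) ind R (g0 * 2 ^+ j <= x) * (g0 * 2 ^+ j)) /\
  (g0 * 2 ^+ J <= x -> g0 * 2 ^+ J <= g0 + \sum_(j < J) ind R (g0 * 2 ^+ j <= x) * (g0 * 2 ^+ j)).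
Proof.
move=> g00; elim: J => [|J [IH1 IH2]].
  rewrite big_ord0 expr0 mulr1 addr0; split => h //; exact: ltW.
rewrite big_ord_recr /=.
have p0 : 0 <= g0 * 2 ^+ J by rewrite mulr_ge0 // exprn_ge0.
have e2 : g0 * 2 ^+ J.+1 = 2 * (g0 * 2 ^+ J) by rewrite exprS; ring.
rewrite e2; split => h.
  case: (ltP x (g0 * 2 ^+ J)) => hx.
    have := IH1 hx; rewrite [ind R false]/ind; lra.
  have := IH2 hx; rewrite [ind R true]/ind; lra.
have hx : g0 * 2 ^+ J <= x by lra.
have := IH2 hx; rewrite hx [ind R true]/ind; lra.
Qed.

Lemma ind_ge0 (R : realType) b : 0 <= ind R b.
Proof. by rewrite /ind; case: b. Qed.

Lemma pigeon (R : realType) m (d : 'I_m -> R) (g0 : R) J :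
  0 < g0 -> (m < 2 ^ J)%N ->
  m%:R * g0 * (J%:R + 2) / 2 < \sum_(i < m) d i ->
  exists j, (j <= J)%N /\
    m%:R <= (\sum_(i < m) ind R (g0 * 2 ^+ j <= d i)) * 2 ^+ j.+1.
Proof.
move=> g0p mJ hs.
set N := fun j => \sum_(i < m) ind R (g0 * 2 ^+ j <= d i).
case: (pselect (exists j, (j <= J)%N /\ m%:R <= N j * 2 ^+ j.+1)) => // hn.
exfalso.
have H : forall j, (j <= J)%N -> N j * 2 ^+ j.+1 < m%:R.
  move=> j hj; rewrite ltNge; apply/negP => h; apply: hn; by exists j.
have Nge0 : forall j, 0 <= N j by move=> j; apply: sumr_ge0 => i _; exact: ind_ge0.
have small : forall i, d i < g0 * 2 ^+ J.
  move=> i; rewrite ltNge; apply/negP => hi.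
  have h1 : 1 <= N J.
    rewrite /N (bigD1 i) //= /ind hi.
    have : 0 <= \sum_(k < m | k != i) ind R (g0 * 2 ^+ J <= d k).
      by apply: sumr_ge0 => k _; exact: ind_ge0.
    lra.
  have h2 := H J (leqnn J).
  have h3 : (m%:R : R) < 2 ^+ J by rewrite -natrX ltr_nat.
  have : 2 ^+ J.+1 <= N J * 2 ^+ J.+1.
    by rewrite -[X in X <= _]mul1r ler_wpM2r // exprn_ge0.
  move: h2; rewrite exprS => h2 h4.
  have : (0 : R) <= m%:R by [].
  lra.
have s2 : \sum_(i < m) d i <=
    \sum_(i < m) (g0 + \sum_(j < J) ind R (g0 * 2 ^+ j <= d i) * (g0 * 2 ^+ j)).
  apply: ler_sum => i _; exact: (proj1 (layer J (d i) (ltW g0p)) (small i)).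
rewrite big_split /= sumr_const card_ord exchange_big /= in s2.
have s3 : \sum_(j < J) \sum_(i < m) ind R (g0 * 2 ^+ j <= d i) * (g0 * 2 ^+ j)
   <= \sum_(j < J) (m%:R * g0 / 2).
  apply: ler_sum => j _; rewrite -mulr_suml.
  have := H j (ltnW (ltn_ord j)); rewrite -/(N j) exprS.
  have : 0 < g0 * 2 ^+ j by rewrite mulr_gt0 // exprn_gt0.
  set a := N j; set b := 2 ^+ j; move=> hb hh.
  have : a * b * g0 <= m%:R * g0 / 2.
    have h5 : a * (2 * b) * g0 <= m%:R * g0 by rewrite ler_wpM2r ?ltW.
    rewrite (_ : a * (2 * b) * g0 = 2 * (a * b * g0)) in h5; last by ring.
    move: h5; set u := m%:R * g0; set v := a * b * g0; lra.
  by rewrite (mulrC g0) mulrA.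
rewrite sumr_const card_ord in s3.
have e : (g0 *+ m : R) = m%:R * g0 by rewrite mulr_natl.
rewrite -[_ *+ J]mulr_natr in s3.
move: hs s2 s3; rewrite e.
set S := \sum_(i < m) d i; set T := \sum_(j < J) _.
move=> hs s2 s3.
rewrite (_ : m%:R * g0 * (J%:R + 2) / 2 = m%:R * g0 + m%:R * g0 / 2 * J%:R) in hs; last by field.
move: hs s2 s3; set u := m%:R * g0; set w := u / 2 * J%:R; lra.
Qed.

Lemma ln2_ge (R : realType) : 1 / 2 <= ln (2 : R).
Proof.
have h := @le_ln1Dx R (- (1/2)).
have e : 1 + - (1 / 2) = (2 : R)^-1 by field.
have e2 : ln ((2:R)^-1) = - ln 2 by rewrite lnV // posrE.
rewrite e e2 in h.
lra.
Qed.

Lemma J_ln (R : realType) m : (0 < m)%N ->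
  ((trunc_log 2 m).+1 + 4)%:R <= 5 * (1 + ln (m%:R : R)).
Proof.
move=> m0; set T := trunc_log 2 m.
have hT : (2 ^ T <= m)%N by apply: trunc_logP.
have h1 : ln ((2 : R) ^+ T) <= ln (m%:R : R).
  rewrite ler_ln ?posrE ?exprn_gt0 ?ltr0n //.
  by rewrite -natrX ler_nat.
rewrite lnXn // in h1.
have h2 := ln2_ge R.
have h3 : 0 <= ln (m%:R : R) by apply: ln_ge0; rewrite ler1n.
have h4 : (T%:R : R) / 2 <= ln 2 *+ T.
  rewrite -mulr_natr mulrC; have : (0 : R) <= T%:R by []. nra.
rewrite -addn1 -addnA !natrD.
lra.
Qed.

Lemma In_cat (T : Type) (x : T) (s1 s2 : seq T) :
  List.In x (s1 ++ s2) -> List.In x s1 \/ List.In x s2.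
Proof.
elim: s1 => [|y s IH] /=; first by right.
by case=> [->|/IH [h|h]]; [left; left | left; right | right].
Qed.

Lemma In_flat (T : Type) (a : nat -> T) (K : nat -> nat) (s : seq nat) B :
  List.In B (flatten [seq nseq (K j) (a j) | j <- s]) -> exists j, B = a j.
Proof.
elim: s => [|j s IH] // h.
have [h1|h2] := @In_cat T B (nseq (K j) (a j)) (flatten [seq nseq (K j) (a j) | j <- s]) h.
  exists j; elim: (K j) h1 => [|n IHn] //= [<-|h1] //; exact: IHn.
exact: IH.
Qed.

Definition Jm m := (trunc_log 2 m).+1.
Definition rr m := (Jm m + 4)%N.
Definition gam (R : realType) m (eps : R) (j : nat) : R :=
  eps ^+ 2 / (Jm m + 2)%:R * 2 ^+ j.
Definition tj (R : realType) m (eps : R) j : nat :=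
  (Num.truncn (4 * (rr m)%:R / gam m eps j)).+1.
Definition thj (R : realType) m (eps : R) j : R :=
  (tj m eps j)%:R ^+ 2 * gam m eps j / 4.
Definition Kj (R : realType) m (eps : R) j : nat :=
  if gam m eps j <= 1 then (2 ^ (j + 3))%N else 0%N.
Definition atomj (R : realType) m (eps : R) j : alg R m :=
  atom m (tj m eps j) (thj m eps j) (rr m).
Definition blist (R : realType) m (eps : R) : seq (alg R m) :=
  flatten [seq nseq (Kj m eps j) (atomj m eps j) | j <- iota 0 (Jm m).+1].
Definition mainalg (R : realType) m (eps : R) : alg R m := chain (blist m eps).

Lemma gam_pos (R : realType) m (eps : R) j : 0 < eps -> 0 < gam m eps j.
Proof.
move=> e0; rewrite /gam mulr_gt0 ?exprn_gt0 // divr_gt0 ?exprn_gt0 ?ltr0n ?addn2 //.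
Qed.

Lemma tg (R : realType) m (eps : R) j : 0 < eps ->
  4 * (rr m)%:R <= (tj m eps j)%:R * gam m eps j.
Proof.
move=> e0; have g0 := gam_pos m j e0.
rewrite -ler_pdivrMr //; apply: ltW; exact: truncnS_gt.
Qed.

Lemma param_ok (R : realType) (t r : nat) (g : R) :
  0 < g -> (4 <= r)%N -> 4 * r%:R <= t%:R * g ->
  0 < t%:R ^+ 2 * g / 4 /\
  (t%:R / 2) / (t%:R ^+ 2 * g / 4) <= 1/4 /\
  r%:R * ((t%:R / 2) / (t%:R ^+ 2 * g / 4)) <= 1/2.
Proof.
move=> g0 r4 h.
have r4' : (4 : R) <= r%:R by rewrite (ler_nat R 4 r).
have X0 : 0 < t%:R * g by lra.
have t0 : (0 : R) < t%:R.
  by move: X0; rewrite pmulr_lgt0.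
have e : (t%:R / 2) / (t%:R ^+ 2 * g / 4) = 2 / (t%:R * g).
  by field; apply/andP; split; apply: lt0r_neq0.
rewrite e; split; first by rewrite divr_gt0 // mulr_gt0 // exprn_gt0.
split.
  rewrite ler_pdivrMr //; lra.
rewrite mulrA ler_pdivrMr //; lra.
Qed.

Lemma cost_term (R : realType) m (eps : R) j : 0 < eps ->
  (Kj m eps j)%:R * (cost (atomj m eps j))%:R <=
  80 * (rr m)%:R ^+ 2 * ((Jm m + 2)%:R / eps ^+ 2).
Proof.
move=> e0; rewrite /Kj.
set y := (Jm m + 2)%:R / eps ^+ 2.
have y0 : 0 < y by rewrite divr_gt0 ?exprn_gt0 // ltr0n addn2.
have r1 : (1 : R) <= (rr m)%:R by rewrite ler1n /rr addn4.
case: ifP => hg; last first.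
  rewrite mul0r; apply: mulr_ge0; [apply: mulr_ge0; [lra | exact: sqr_ge0] | exact: ltW].
set r := (rr m)%:R; set P : R := 2 ^+ j.
have P0 : 0 < P by rewrite exprn_gt0.
have eg : gam m eps j = P / y.
  have ee : eps != 0 by apply: lt0r_neq0.
  have eJ : (Jm m)%:R + 2 != 0 :> R.
    apply: lt0r_neq0; have : (0:R) <= (Jm m)%:R by []. lra.
  by rewrite /gam /y /P; field; rewrite ee eJ.
have hc : ((cost (atomj m eps j))%:R : R) <= r * (2 * (tj m eps j)%:R).
  rewrite /atomj; have := cost_atom m (tj m eps j) (thj m eps j) (rr m).
  rewrite -(ler_nat R) natrM natrD => h; apply: le_trans h _; rewrite /r; lra.
have ht : ((tj m eps j)%:R : R) <= 4 * r * y / P + 1.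
  rewrite /tj -(natr1) lerD2r.
  have := truncn_itv (ltW (divr_gt0 (mulr_gt0 (ltr0n R 4 : 0 < 4) (lt_le_trans ltr01 r1)) (gam_pos m j e0))).
  move=> /andP[h _]; apply: le_trans h _; rewrite eg.
  have -> : 4 * (rr m)%:R / (P / y) = 4 * r * y / P by rewrite /r; field; apply/andP; split; apply: lt0r_neq0.
  done.
have K : ((2 ^ (j + 3))%N%:R : R) = 8 * P by rewrite natrX exprD /P mulrC; congr (_ * _); ring.
rewrite K.
have hP : P <= y.
  by move: hg; rewrite eg ler_pdivrMr // mul1r.
have c0 : (0 : R) <= (cost (atomj m eps j))%:R by [].
have e1 : 8 * P * (r * (2 * (4 * r * y / P + 1))) = 64 * r ^+ 2 * y + 16 * r * P.
  by field; apply: lt0r_neq0.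
apply: (@le_trans _ _ (8 * P * (r * (2 * (4 * r * y / P + 1))))).
  apply: ler_wpM2l; first lra.
  apply: le_trans hc _; apply: ler_wpM2l; first lra.
  lra.
rewrite e1.
have : r * P <= r * (r * y).
  apply: ler_wpM2l; first lra.
  have : y <= r * y by rewrite -[X in X <= _]mul1r ler_wpM2r // ltW.
  lra.
have e3 : 64 * r ^+ 2 * y + 16 * r * P = 64 * (r * (r * y)) + 16 * (r * P) by ring.
have e4 : 80 * r ^+ 2 * y = 80 * (r * (r * y)) by ring.
rewrite e3 e4; set u := r * P; set v := r * (r * y); move=> h; lra.
Qed.

Lemma sum_const_seq (R : realType) (T : Type) (s : seq T) (c : R) :
  \sum_(x <- s) c = (size s)%:R * c.
Proof.
elim: s => [|x s IH]; first by rewrite big_nil mul0r.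
by rewrite big_cons IH /= -(addn1 (size s)) natrD; ring.
Qed.

Lemma iota_mkord (R : realType) n (F : nat -> R) :
  \sum_(j <- iota 0 n) F j = \sum_(j < n) F j.
Proof. by rewrite -(big_mkord xpredT) /index_iota subn0. Qed.

Lemma iota_mkord_prod (R : realType) n (F : nat -> R) :
  \prod_(j <- iota 0 n) F j = \prod_(j < n) F j.
Proof. by rewrite -(big_mkord xpredT) /index_iota subn0. Qed.

Lemma half_pow (R : realType) n : (4 <= n)%N -> (1 / 2 : R) ^+ n <= 1 / 4.
Proof.
move=> hn; rewrite -(subnK hn) exprD.
have h1 : (1 / 2 : R) ^+ (n - 4) <= 1 by apply: exprn_ile1; lra.
have h0 : (0 : R) <= (1 / 2) ^+ (n - 4) by apply: exprn_ge0; lra.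
have -> : (1 / 2 : R) ^+ 4 = 1 / 16 by rewrite !exprS expr0; field.
lra.
Qed.

Lemma cost_main (R : realType) m (eps : R) : (1 <= m)%N -> 0 < eps ->
  (cost (mainalg m eps))%:R <= (80 * 625) * (1 + ln (m%:R : R)) ^+ 4 / eps ^+ 2.
Proof.
move=> m1 e0.
have h1 : ((cost (mainalg m eps))%:R : R) <=
    \sum_(j <- iota 0 (Jm m).+1) (Kj m eps j)%:R * (cost (atomj m eps j))%:R.
  apply: le_trans (_ : ((\sum_(B <- blist m eps) cost B)%N%:R : R) <= _).
    by rewrite ler_nat; apply: cost_chain.
  rewrite natr_sum /blist big_flatten big_map le_eqVlt; apply/orP; left; apply/eqP.
  by apply: eq_bigr => j _; rewrite sum_nseq.
set J := Jm m.
set y := (J + 2)%:R / eps ^+ 2.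
have h2 : \sum_(j <- iota 0 J.+1) (Kj m eps j)%:R * (cost (atomj m eps j))%:R <=
    \sum_(j <- iota 0 J.+1) (80 * (rr m)%:R ^+ 2 * y).
  by apply: ler_sum => j _; apply: cost_term.
rewrite sum_const_seq size_iota in h2.
have hJ := J_ln R m1.
rewrite -/(Jm m) -/J -/(rr m) in hJ.
set a := (rr m)%:R in h2 hJ.
set L := 1 + ln (m%:R : R) in hJ *.
have ha1 : (J.+1%:R : R) <= a by rewrite /a ler_nat /rr; lia.
have ha2 : ((J + 2)%:R : R) <= a by rewrite /a ler_nat /rr; lia.
have a0 : (0 : R) <= a by rewrite /a.
have hJ0 : (0 : R) <= J.+1%:R by [].
have hJ2 : (0 : R) <= (J + 2)%:R by [].
have w0 : 0 < (eps ^+ 2)^-1 by rewrite invr_gt0 exprn_gt0.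
have h4 : a ^+ 4 <= (5 * L) ^+ 4 by apply: lerXn2r; rewrite ?nnegrE //; lra.
have h5 : J.+1%:R * (80 * a ^+ 2 * (J + 2)%:R) <= (80 * 625) * L ^+ 4.
  have : J.+1%:R * (J + 2)%:R <= a * a by apply: ler_pM.
  rewrite exprMn in h4.
  have e5 : (5 : R) ^+ 4 = 625 by rewrite !exprS expr0; ring.
  rewrite e5 in h4.
  have e6 : a ^+ 4 = a ^+ 2 * (a * a) by rewrite -expr2 -exprD.
  have a2 : 0 <= a ^+ 2 by exact: sqr_ge0.
  move=> h; have := ler_wpM2l a2 h; rewrite -e6 => h'.
  have e7 : J.+1%:R * (80 * a ^+ 2 * (J + 2)%:R) = 80 * (a ^+ 2 * (J.+1%:R * (J + 2)%:R)) by ring.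
  rewrite e7; lra.
apply: le_trans h1 _; apply: le_trans h2 _.
rewrite /y.
have -> : J.+1%:R * (80 * a ^+ 2 * ((J + 2)%:R / eps ^+ 2)) =
          (J.+1%:R * (80 * a ^+ 2 * (J + 2)%:R)) * (eps ^+ 2)^-1 by ring.
by apply: ler_wpM2r => //; exact: ltW.
Qed.

Lemma wf_blist (R : realType) m (eps : R) :
  forall B, List.In B (blist m eps) -> wf_alg B.
Proof. by move=> B /(@In_flat _ (atomj m eps) (Kj m eps)) [j ->]; exact: wf_atom. Qed.

Lemma params (R : realType) m (eps : R) j : 0 < eps ->
  0 < thj m eps j /\
  ((tj m eps j)%:R / 2) / thj m eps j <= 1/4 /\
  (rr m)%:R * (((tj m eps j)%:R / 2) / thj m eps j) <= 1/2.
Proof.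
move=> e0; apply: param_ok; [exact: gam_pos | by rewrite /rr leq_addl | exact: tg].
Qed.

Lemma null_main (R : realType) m (eps : R) (p q : 'I_m -> bool -> R) :
  (1 <= m)%N -> 0 < eps -> dists p q -> (forall i, p i = q i) ->
  2 / 3 <= prob_yes p q (mainalg m eps).
Proof.
move=> m1 e0 D pq.
rewrite /mainalg prob_chain //; last exact: wf_blist.
apply: le_trans (prod_lb _) => [|B hB]; last first.
  exact: prob_bounds (wf_blist hB).
rewrite /blist big_flatten big_map.
rewrite (eq_bigr (fun j => (Kj m eps j)%:R * (1 - prob_yes p q (atomj m eps j)))); last first.
  by move=> j _; rewrite sum_nseq.
set J := Jm m.
have h1 : \sum_(j <- iota 0 J.+1) (Kj m eps j)%:R * (1 - prob_yes p q (atomj m eps j))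
   <= \sum_(j <- iota 0 J.+1) (Kj m eps j)%:R * (1/4) ^+ rr m.
  apply: ler_sum => j _; apply: ler_wpM2l => //.
  have [h0 [h2 _]] := params m j e0.
  exact: atom_null.
rewrite -mulr_suml -natr_sum in h1.
have h2 : (\sum_(j <- iota 0 J.+1) Kj m eps j <= 2 ^ (rr m))%N.
  apply: leq_trans (_ : (\sum_(j <- iota 0 J.+1) 2 ^ (j + 3) <= _)%N).
    by apply: leq_sum => j _; rewrite /Kj; case: ifP.
  rewrite (_ : iota 0 J.+1 = index_iota 0 J.+1); last by rewrite /index_iota subn0.
  rewrite big_mkord.
  have := sum_pow2 J.+1.
  have -> : (J.+1 + 3 = rr m)%N by rewrite /rr /J; lia.
  generalize (\sum_(i < J.+1) 2 ^ (i + 3))%N (2 ^ rr m)%N => u v; lia.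
have h3 : ((\sum_(j <- iota 0 J.+1) Kj m eps j)%:R : R) * (1 / 4) ^+ rr m <= 1 / 4.
  apply: le_trans (_ : (2 ^ rr m)%N%:R * (1 / 4) ^+ rr m <= _).
    by apply: ler_wpM2r; [apply: exprn_ge0; lra | rewrite ler_nat].
  rewrite natrX -exprMn.
  have -> : (2%:R * (1 / 4) : R) = 1 / 2 by field.
  by apply: half_pow; rewrite /rr leq_addl.
lra.
Qed.

Lemma eK_lemma (R : realType) m (eps : R) j0 : gam m eps j0 <= 1 ->
  (Kj m eps j0)%:R = 4 * 2 ^+ j0.+1 :> R.
Proof.
move=> hg1.
rewrite /Kj hg1 natrX (_ : (j0 + 3 = 2 + j0.+1)%N); last by lia.
by rewrite exprD; congr (_ * _); rewrite expr2; ring.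
Qed.

Lemma Kx_lemma (R : realType) (N M P : R) : 0 < M -> M <= N * P ->
  2 <= 4 * P * (N / (2 * M)).
Proof.
move=> M0 h.
have e : 4 * P * (N / (2 * M)) = 2 * (N * P) / M by field; apply: lt0r_neq0.
rewrite e ler_pdivlMr //; lra.
Qed.

Lemma pow_third (R : realType) (x : R) K : 0 <= x <= 1 -> 2 <= K%:R * x ->
  (1 - x) ^+ K <= 1 / 3.
Proof.
move=> hx h; have hb2 := bern_pow K hx.
have y0 : 0 <= (1 - x) ^+ K by apply: exprn_ge0; case/andP: hx => _; lra.
move: hb2 y0; set y := (1 - x) ^+ K => hb2 y0.
have : y * 3 <= y * (1 + K%:R * x) by apply: ler_wpM2l => //; lra.
move: hb2; set z := y * (1 + K%:R * x); lra.
Qed.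

Lemma alt_main (R : realType) m (eps : R) (p q : 'I_m -> bool -> R) :
  (1 <= m)%N -> 0 < eps -> dists p q ->
  eps ^+ 2 < (m%:R)^-1 * \sum_(i < m) sqdist (p i) (q i) ->
  prob_yes p q (mainalg m eps) <= 1/3.
Proof.
move=> m1 e0 D hs.
have mR : 0 < (m%:R : R) by rewrite ltr0n.
pose d := fun i => (p i true - q i true) ^+ 2.
have dr : forall i, 0 <= d i <= 1.
  move=> i; case: D => hp hq; have [a0 [a1 ea]] := hp i; have [b0 [b1 eb]] := hq i.
  rewrite /d; apply/andP; split; first exact: sqr_ge0.
  have : p i true <= 1 by lra. have : q i true <= 1 by lra. nra.
have sq : forall i, sqdist (p i) (q i) = 2 * d i.
  move=> i; case: D => hp hq; have [a0 [a1 ea]] := hp i; have [b0 [b1 eb]] := hq i.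
  rewrite /sqdist /d.
  have -> : p i false = 1 - p i true by lra.
  have -> : q i false = 1 - q i true by lra.
  ring.
set J := Jm m.
have J2 : ((J + 2)%:R : R) != 0 by rewrite pnatr_eq0 addn2.
have hd : m%:R * (eps ^+ 2 / (J + 2)%:R) * (J%:R + 2) / 2 < \sum_(i < m) d i.
  rewrite (eq_bigr _ (fun i _ => sq i)) -mulr_sumr in hs.
  have e : m%:R * (eps ^+ 2 / (J + 2)%:R) * (J%:R + 2) / 2 = m%:R * eps ^+ 2 / 2.
    by rewrite natrD; field; rewrite -natrD.
  rewrite e; rewrite -(ltr_pM2l mR) in hs.
  have e2 : m%:R * (m%:R^-1 * (2 * \sum_(i < m) d i)) = 2 * \sum_(i < m) d i.
    by field; apply: lt0r_neq0.
  rewrite e2 in hs; move: hs; set S := \sum_(i < m) d i; set u := m%:R * eps ^+ 2.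
  have -> : u / 2 = u * (1/2) by ring.
  lra.
have g0p : 0 < eps ^+ 2 / (J + 2)%:R by rewrite divr_gt0 ?exprn_gt0 // ltr0n addn2.
have mJ : (m < 2 ^ J)%N by apply: trunc_log_ltn.
have [j0 [hj0 hN]] := @pigeon R m d (eps ^+ 2 / (J + 2)%:R) J g0p mJ hd.
set N := \sum_(i < m) ind R (eps ^+ 2 / (J + 2)%:R * 2 ^+ j0 <= d i) in hN.
have eg : gam m eps j0 = eps ^+ 2 / (J + 2)%:R * 2 ^+ j0 by [].
have N0 : 0 <= N by apply: sumr_ge0 => i _; exact: ind_ge0.
have Nm : N <= m%:R.
  have : N <= \sum_(i < m) (1 : R).
    by rewrite /N; apply: ler_sum => i _; rewrite /ind; case: ifP.
  by rewrite sumr_const card_ord.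
have hg1 : gam m eps j0 <= 1.
  case: (pselect (exists i, gam m eps j0 <= d i)) => [[i hi]|hn].
    by apply: le_trans hi _; have /andP[] := dr i.
  exfalso.
  have : N = 0.
    rewrite /N; apply: big1 => i _; rewrite /ind; case: ifP => // h.
    by exfalso; apply: hn; exists i; rewrite eg.
  move=> N00; rewrite N00 mul0r in hN; lra.
have [th0 [_ hb]] := params m j0 e0.
have ha := @atom_alt R m p q (tj m eps j0) (thj m eps j0) (rr m)
   (fun i => gam m eps j0 <= d i) (m1 : (0 < m)%N) D th0 hb.
have ha' : prob_yes p q (atomj m eps j0) * m%:R <= m%:R - N / 2.
  apply: ha => i /= hi.
  have -> : 4 * thj m eps j0 = (tj m eps j0)%:R ^+ 2 * gam m eps j0 by rewrite /thj; field.
  rewrite exprMn; apply: ler_wpM2l; first exact: sqr_ge0.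
  exact: hi.
pose x := N / (2 * m%:R).
have hx : prob_yes p q (atomj m eps j0) <= 1 - x.
  rewrite /x; have e : 1 - N / (2 * m%:R) = (m%:R - N / 2) / m%:R.
    by field; apply: lt0r_neq0.
  by rewrite e ler_pdivlMr.
have x0 : 0 <= x by rewrite /x divr_ge0 // mulr_ge0 // ltW.
have x1 : x <= 1.
  rewrite /x ler_pdivrMr ?mulr_gt0 //; lra.
have /andP[P0 P1] := prob_bounds D (wf_atom m (tj m eps j0) (thj m eps j0) (rr m)).
set K := Kj m eps j0.
have eK : K%:R = 4 * 2 ^+ j0.+1 :> R.
  exact: eK_lemma.
have Kx : 2 <= K%:R * x.
  rewrite eK /x; exact: Kx_lemma.
have hF : prob_yes p q (atomj m eps j0) ^+ K <= 1 / 3.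
  apply: le_trans (_ : (1 - x) ^+ K <= _).
    by apply: lerXn2r; rewrite ?nnegrE ?subr_ge0 //.
  by apply: pow_third => //; rewrite x0 x1.
rewrite /mainalg prob_chain //; last exact: wf_blist.
rewrite /blist big_flatten big_map.
rewrite (eq_bigr (fun j => prob_yes p q (atomj m eps j) ^+ Kj m eps j)); last first.
  by move=> j _; rewrite prod_nseq.
rewrite iota_mkord_prod.
have hj0' : (j0 < J.+1)%N by [].
rewrite (bigD1 (Ordinal hj0')) //=.
have rest : \prod_(j < J.+1 | j != Ordinal hj0') prob_yes p q (atomj m eps j) ^+ Kj m eps j <= 1.
  apply: prodr_ile1 => j _.
  have /andP[a0 a1] := prob_bounds D (wf_atom m (tj m eps j) (thj m eps j) (rr m)).
  by rewrite exprn_ge0 // exprn_ile1.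
have F0 : 0 <= prob_yes p q (atomj m eps j0) ^+ K by apply: exprn_ge0.
apply: le_trans hF.
rewrite -/K; set Rr := \prod_(j < J.+1 | _) _ in rest *.
by rewrite -[X in _ <= X]mulr1 ler_wpM2l.
Qed.

Theorem mainTheorem2 (R : realType) :
  exists C : R, 0 < C /\
  forall (m : nat) (eps : R), (1 <= m)%N -> 0 < eps ->
  exists A : alg R m,
    wf_alg A /\
    (cost A)%:R <= C * (1 + ln (m%:R : R)) ^+ 4 / eps ^+ 2 /\
    forall p q : 'I_m -> bool -> R,
      (forall i, is_dist (p i)) -> (forall i, is_dist (q i)) ->
      ((forall i, p i = q i) -> 2 / 3 <= prob_yes p q A) /\
      (eps ^+ 2 < (m%:R)^-1 * \sum_(i < m) sqdist (p i) (q i) ->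
         2 / 3 <= 1 - prob_yes p q A).
Proof.
exists (80 * 625); split; first by rewrite mulr_gt0 // ltr0n.
move=> m eps m1 e0; exists (mainalg m eps); split; [|split].
- exact: wf_chain (@wf_blist R m eps).
- exact: cost_main.
move=> p q hp hq; have D : dists p q by [].
split.
  by move=> pq; apply: null_main.
move=> hs; have := alt_main m1 e0 D hs; lra.
Qed.
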